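(* Let $L\ge 3$, and let $G=(V,E)$, $B$ and the plaquettes be those of the planar surface code defined below. Let $D\subseteq V\setminus B$ be arbitrary (of any parity). Then $G$ has a minimum-size $D$-join $J$ relative to $B$ such that every vertex of $D$ has $J$-degree exactly $1$. More specifically, if $J$ is any minimum-size $D$-join of $G$ relative to $B$, then there is a set $P$ of plaquettes such that $J' = J\oplus\bigoplus_{f\in P}\partial f$ satisfies $|J'|=|J|$ and every vertex of $D$ has $J'$-degree exactly $1$.
   Context: Vertex set: $V=\{0,1,\dots,L\}\times\{0,1,\dots,L-1\}$. Edge set: $E$ consists of all horizontal edges $\{(x,y),(x+1,y)\}$ with $0\le x\le L-1$, together with the vertical edges $\{(x,y),(x,y+1)\}$ with $1\le x\le L-1$ and $0\le y\le L-2$. Equivalently, these are the unit grid edges except the vertical edges on the two sides $x=0$ and $x=L$. Boundary vertices: $B=\{(x,y)\in V: x\in\{0,L\}\}$. Plaquettes: for $0\le x\le L-1$ and $0\le y\le L-2$, the plaquette $f_{x,y}$ is the unit square with corners $(x,y),(x+1,y),(x,y+1),(x+1,y+1)$. Its relative boundary $\partial f_{x,y}$ is the set of its four sides that belong to $E$. The symbol $\oplus$ denotes symmetric difference. For $J\subseteq E$, the $J$-degree of a vertex is the number of edges of $J$ incident to it. For disjoint $B,D\subseteq V$, a $D$-join relative to $B$ is a set $J\subseteq E$ such that every vertex of $D$ has odd $J$-degree and every vertex of $V\setminus(D\cup B)$ has even $J$-degree; vertices of $B$ are unconstrained. This is the $[[2L^2-2L+1,1,L]]$ planar surface code: qubits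 are the edges in $E$, $X$-checks are the vertices in $V\setminus B$ (support = incident edges), and $Z$-checks are the plaquettes (support = relative boundary). Its dual lattice is isomorphic to this one. *)

(* Defs.v *)
From mathcomp Require Import all_boot.
Set Implicit Arguments. Unset Strict Implicit. Unset Printing Implicit Defensive.

Definition vtx (L : nat) : finType := ('I_L.+1 * 'I_L)%type.

Definition vx L (v : vtx L) : nat := nat_of_ord v.1.
Definition vy L (v : vtx L) : nat := nat_of_ord v.2.

Definition adj L (u w : vtx L) : bool :=
  ((vy u == vy w) && (vx u + 1 == vx w))
  || [&& vx u == vx w, 1 <= vx u, vx u <= L - 1 & vy u + 1 == vy w].

Definition edges L : {set {set vtx L}} :=
  [set e | [exists u, exists w, (e == [set u; w]) && adj u w]].

Definition bnd L : {set vtx L} := [set v | (vx v == 0) || (vx v == L)].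

Definition deg L (J : {set {set vtx L}}) (v : vtx L) : nat :=
  #|[set e in J | v \in e]|.

Definition is_Djoin L (D : {set vtx L}) (J : {set {set vtx L}}) : Prop :=
  [/\ J \subset edges L,
      (forall v, v \in D -> odd (deg J v)) &
      (forall v, v \notin D -> v \notin bnd L -> ~~ odd (deg J v))].

Definition is_min_Djoin L (D : {set vtx L}) (J : {set {set vtx L}}) : Prop :=
  is_Djoin D J /\ (forall J', is_Djoin D J' -> #|J| <= #|J'|).

Definition plaq (L : nat) : finType := ('I_L * 'I_L.-1)%type.

Definition corners L (f : plaq L) : {set vtx L} :=
  [set v : vtx L | [&& f.1 <= vx v <= f.1 + 1 & f.2 <= vy v <= f.2 + 1]].

(* Relative boundary: the sides of the square that belong to E
   (these are exactly the edges of E with both endpoints among the corners). *)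
Definition pbd L (f : plaq L) : {set {set vtx L}} :=
  [set e in edges L | e \subset corners f].

Definition symdiff (T : finType) (A B : {set T}) : {set T} :=
  (A :\: B) :|: (B :\: A).

Definition pbd_sum L (P : {set plaq L}) : {set {set vtx L}} :=
  \big[@symdiff _/set0]_(f in P) pbd f.

(* Main.v *)
Require Import Defs.
From HB Require Import structures.
From mathcomp Require Import all_boot.
From mathcomp Require Import zify.
Set Implicit Arguments. Unset Strict Implicit. Unset Printing Implicit Defensive.

Section Sym.
Variable T : finType.
Lemma in_symdiff (A B : {set T}) x : (x \in symdiff A B) = (x \in A) (+) (x \in B).
Proof. by rewrite /symdiff !inE; case: (x \in A); case: (x \in B). Qed.
Lemma symdiffA : associative (@symdiff T).
Proof. by move=> A B C; apply/setP => x; rewrite !in_symdiff addbA. Qed.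
Lemma symdiffC : commutative (@symdiff T).
Proof. by move=> A B; apply/setP => x; rewrite !in_symdiff addbC. Qed.
Lemma symdiff0s : left_id set0 (@symdiff T).
Proof. by move=> A; apply/setP => x; rewrite !in_symdiff inE. Qed.
Lemma symdiffs0 (A : {set T}) : symdiff A set0 = A.
Proof. by rewrite symdiffC symdiff0s. Qed.
Lemma symdiffss (A : {set T}) : symdiff A A = set0.
Proof. by apply/setP => x; rewrite !in_symdiff addbb inE. Qed.
End Sym.

HB.instance Definition _ (T : finType) :=
  Monoid.isComLaw.Build {set T} set0 (@symdiff T) (@symdiffA T) (@symdiffC T) (@symdiff0s T).

Lemma card_symdiff (T : finType) (A B : {set T}) :
  #|symdiff A B| + 2 * #|A :&: B| = #|A| + #|B|.
Proof.
rewrite /symdiff cardsU.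
have -> : (A :\: B) :&: (B :\: A) = set0.
  by apply/setP => x; rewrite !inE; case: (x \in A); case: (x \in B).
rewrite cards0 subn0 -(cardsID B A) -(cardsID A B) setIC.
lia.
Qed.

Lemma sum_symdiff (T : finType) (A B : {set T}) (F : T -> nat) :
  \sum_(e in symdiff A B) F e = \sum_(e in A :\: B) F e + \sum_(e in B :\: A) F e.
Proof.
rewrite (big_setID (A :\: B)) /=.
have -> : symdiff A B :&: (A :\: B) = A :\: B.
  by apply/setP => x; rewrite !inE; case: (x \in A); case: (x \in B).
have -> : symdiff A B :\: (A :\: B) = B :\: A.
  by apply/setP => x; rewrite !inE; case: (x \in A); case: (x \in B).
by [].
Qed.

Lemma sum_sub (T : finType) (A B : {set T}) (F : T -> nat) :
  A \subset B -> \sum_(e in A) F e <= \sum_(e in B) F e.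
Proof.
move=> sAB; rewrite [X in _ <= X](big_setID A) /=.
by rewrite (setIidPr sAB) leq_addr.
Qed.

Lemma sum_set2 (T : finType) (a b : T) (F : T -> nat) : a != b ->
  \sum_(e in [set a; b]) F e = F a + F b.
Proof. by move=> ab; rewrite big_setU1 ?inE //= big_set1. Qed.

Lemma card_sub2 (T : finType) (A : {set T}) p q :
  A \subset [set p; q] -> p != q -> #|A| = (p \in A) + (q \in A).
Proof.
move=> sA pq.
have HA e : e \in A -> (e == p) || (e == q).
  by move=> eA; have := subsetP sA e eA; rewrite !inE.
case pA: (p \in A); case qA: (q \in A).
- have -> : A = [set p; q].
    apply/setP => e; rewrite !inE; apply/idP/idP; first exact: HA.
    by case/orP => /eqP->.
  by rewrite cards2 pq.
- have -> : A = [set p].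
    apply/setP => e; rewrite !inE; apply/idP/idP; last by move/eqP->.
    by move=> eA; case/orP: (HA e eA) => // /eqP ee; rewrite ee qA in eA.
  by rewrite cards1.
- have -> : A = [set q].
    apply/setP => e; rewrite !inE; apply/idP/idP; last by move/eqP->.
    by move=> eA; case/orP: (HA e eA) => // /eqP ee; rewrite ee pA in eA.
  by rewrite cards1.
- have -> : A = set0.
    apply/setP => e; rewrite !inE; apply/idP => eA.
    by case/orP: (HA e eA) => /eqP ee; rewrite ee ?pA ?qA in eA.
  by rewrite cards0.
Qed.

Section Geo.
Variable L : nat.
Hypothesis hL : 2 < L.
Local Notation V := (vtx L).

Lemma hL0 : 0 < L. Proof. lia. Qed.
Lemma hL1 : 0 < L.-1. Proof. lia. Qed.

Definition mkv (i j : nat) : V := (insubd ord0 i, insubd (Ordinal hL0) j).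
Definition mkp (i j : nat) : plaq L := (insubd (Ordinal hL0) i, insubd (Ordinal hL1) j).

Lemma vx_mkv i j : i <= L -> vx (mkv i j) = i.
Proof. by move=> h; rewrite /vx /mkv /= val_insubd ltnS h. Qed.
Lemma vy_mkv i j : j < L -> vy (mkv i j) = j.
Proof. by move=> h; rewrite /vy /mkv /= val_insubd h. Qed.
Lemma mkp1 i j : i < L -> (mkp i j).1 = i :> nat.
Proof. by move=> h; rewrite /mkp /= val_insubd h. Qed.
Lemma mkp2 i j : j < L.-1 -> (mkp i j).2 = j :> nat.
Proof. by move=> h; rewrite /mkp /= val_insubd h. Qed.

Lemma vx_le (u : V) : vx u <= L.
Proof. by rewrite /vx -ltnS ltn_ord. Qed.
Lemma vy_lt (u : V) : vy u < L.
Proof. by rewrite /vy ltn_ord. Qed.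

Lemma vtx_eqE (a b : V) : (a == b) = (vx a == vx b) && (vy a == vy b).
Proof.
case: a b => [a1 a2] [b1 b2]; rewrite /vx /vy /=.
by rewrite -pair_eqE /= .
Qed.

Lemma vtx_eq (a b : V) : vx a = vx b -> vy a = vy b -> a = b.
Proof. by move=> h1 h2; apply/eqP; rewrite vtx_eqE h1 h2 !eqxx. Qed.

Lemma eq_mkv (u : V) i j : i <= L -> j < L -> (u == mkv i j) = (vx u == i) && (vy u == j).
Proof. by move=> hi hj; rewrite vtx_eqE vx_mkv // vy_mkv. Qed.

Lemma mkv_vxvy (v : V) : mkv (vx v) (vy v) = v.
Proof. by apply: vtx_eq; rewrite ?vx_mkv ?vy_mkv ?vx_le ?vy_lt. Qed.

Definition hor (a b : V) := (vy a == vy b) && (vx a + 1 == vx b).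
Definition ver (a b : V) :=
  [&& vx a == vx b, 1 <= vx a, vx a <= L - 1 & vy a + 1 == vy b].

Lemma adjE (a b : V) : adj a b = hor a b || ver a b.
Proof. by []. Qed.

Lemma edgesP e : reflect (exists a b, e = [set a; b] /\ adj a b) (e \in edges L).
Proof.
rewrite inE; apply: (iffP existsP).
  move=> [a] /existsP [b] /andP [/eqP -> h].
  by exists a, b.
move=> [a [b [-> h]]].
by exists a; apply/existsP; exists b; rewrite eqxx.
Qed.

Lemma adj_neq (a b : V) : adj a b -> a != b.
Proof.
move=> h; apply/eqP => ab; subst b; move: h; rewrite adjE /hor /ver; lia.
Qed.

Lemma set2_eq (T : finType) (u w a b : T) : a != b -> [set u; w] = [set a; b] ->
  (u = a /\ w = b) \/ (u = b /\ w = a).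
Proof.
move=> ab H.
have ua : u \in [set a; b] by rewrite -H !inE eqxx.
have wa : w \in [set a; b] by rewrite -H !inE eqxx orbT.
have au : a \in [set u; w] by rewrite H !inE eqxx.
have bu : b \in [set u; w] by rewrite H !inE eqxx orbT.
move: ua wa au bu; rewrite !inE.
case/orP => /eqP -> ; case/orP => /eqP ->; rewrite ?eqxx /= ?orbF ?orbb.
- by move=> _ /eqP ba; rewrite ba eqxx in ab.
- by left.
- by right.
- by move=> /eqP ab' _; rewrite ab' eqxx in ab.
Qed.

Variable f : plaq L.
Local Notation x := (nat_of_ord f.1).
Local Notation y := (nat_of_ord f.2).
Lemma fx : x < L. Proof. exact: ltn_ord. Qed.
Lemma fy : y.+1 < L. Proof. have := ltn_ord f.2; lia. Qed.

Definition hs (j : nat) : {set V} := [set mkv x j; mkv x.+1 j].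
Definition vs (i : nat) : {set V} := [set mkv i y; mkv i y.+1].

Lemma in_hs u j : j < L -> (u \in hs j) = (vy u == j) && ((vx u == x) || (vx u == x.+1)).
Proof.
move=> hj; have := fx => hx.
rewrite !inE !eq_mkv //; lia.
Qed.

Lemma in_vs u i : i <= L -> (u \in vs i) = (vx u == i) && ((vy u == y) || (vy u == y.+1)).
Proof.
move=> hi; have := fy => hy.
rewrite !inE !eq_mkv //; lia.
Qed.

Lemma in_corners u : (u \in corners f) = (x <= vx u <= x.+1) && (y <= vy u <= y.+1).
Proof. rewrite inE. lia. Qed.

Lemma pbd_sides e : e \in pbd f ->
  e \in [set hs y; hs y.+1; vs x; vs x.+1].
Proof.
rewrite inE => /andP [/edgesP [a [b [-> hab]]] sub].
have ac : a \in corners f by apply: (subsetP sub); rewrite !inE eqxx.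
have bc : b \in corners f by apply: (subsetP sub); rewrite !inE eqxx orbT.
move: ac bc; rewrite !in_corners => /andP [ha1 ha2] /andP [hb1 hb2].
have hx := fx; have hy := fy.
move: hab; rewrite adjE /hor /ver; case/orP.
- case/andP => /eqP eyy /eqP exx.
  have ea : a = mkv x (vy a) by apply: vtx_eq; rewrite ?vx_mkv ?vy_mkv ?vy_lt //; lia.
  have eb : b = mkv x.+1 (vy a) by apply: vtx_eq; rewrite ?vx_mkv ?vy_mkv ?vy_lt //; lia.
  have -> : [set a; b] = hs (vy a) by rewrite /hs -ea -eb.
  have : (vy a == y) || (vy a == y.+1) by lia.
  by rewrite !inE; case/orP => /eqP ->; rewrite eqxx ?orbT.
- case/and4P => /eqP exx _ _ /eqP eyy.
  have ea : a = mkv (vx a) y by apply: vtx_eq; rewrite ?vx_mkv ?vy_mkv ?vx_le //; lia.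
  have eb : b = mkv (vx a) y.+1 by apply: vtx_eq; rewrite ?vx_mkv ?vy_mkv ?vx_le //; lia.
  have -> : [set a; b] = vs (vx a) by rewrite /vs -ea -eb.
  have : (vx a == x) || (vx a == x.+1) by lia.
  by rewrite !inE; case/orP => /eqP ->; rewrite eqxx ?orbT.
Qed.

Lemma hs_edge j : j < L -> hs j \in edges L.
Proof.
move=> hj; have hx := fx; apply/edgesP; exists (mkv x j), (mkv x.+1 j); split => //.
rewrite adjE /hor !vx_mkv ?vy_mkv //; lia.
Qed.

Lemma vs_edge i : 1 <= i <= L - 1 -> vs i \in edges L.
Proof.
move=> hi; have hy := fy; apply/edgesP; exists (mkv i y), (mkv i y.+1); split => //.
rewrite adjE /ver !vx_mkv ?vy_mkv //; try lia.
Qed.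

Lemma hs_sub j : (j == y) || (j == y.+1) -> hs j \subset corners f.
Proof.
move=> hj; have hx := fx; have hy := fy.
apply/subsetP => u; rewrite in_hs ?in_corners; lia.
Qed.

Lemma vs_sub i : (i == x) || (i == x.+1) -> vs i \subset corners f.
Proof.
move=> hi; have hx := fx; have hy := fy.
apply/subsetP => u; rewrite in_vs ?in_corners; lia.
Qed.

Lemma hs_neq_vs i j : j < L -> i <= L -> hs j != vs i.
Proof.
move=> hj hi; apply/eqP => E; have hx := fx.
have h1 : mkv x j \in vs i by rewrite -E !inE eqxx.
have h2 : mkv x.+1 j \in vs i by rewrite -E !inE eqxx orbT.
move: h1 h2; rewrite !in_vs // !vx_mkv //; lia.
Qed.

Lemma in_pbd e : (e \in pbd f) = (e \in edges L) && (e \subset corners f).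
Proof. by rewrite inE. Qed.
Lemma in_Sdeg (A : {set {set V}}) e u : (e \in [set e in A | u \in e]) = (e \in A) && (u \in e).
Proof. by rewrite inE. Qed.

Lemma deg_pbd_even u : u \notin bnd L -> ~~ odd (deg (pbd f) u).
Proof.
move=> ub; rewrite /deg; have hx := fx; have hy := fy.
have ux : 1 <= vx u <= L - 1.
  by move: ub; rewrite inE; have := vx_le u; lia.
case uc: (u \in corners f); last first.
  suff -> : [set e in pbd f | u \in e] = set0 by rewrite cards0.
  apply/setP => e; rewrite !inE; apply/negP => /andP [/andP [_ es] ue].
  by rewrite (subsetP es _ ue) in uc.
move: (uc); rewrite in_corners => /andP [c1 c2].
have j1 : (vy u == y) || (vy u == y.+1) by lia.
have i1 : (vx u == x) || (vx u == x.+1) by lia.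
have hsin : hs (vy u) \in [set e in pbd f | u \in e].
  rewrite in_Sdeg in_pbd hs_edge ?vy_lt // hs_sub //= in_hs ?vy_lt // eqxx /=; exact: i1.
have vsin : vs (vx u) \in [set e in pbd f | u \in e].
  rewrite in_Sdeg in_pbd vs_edge // vs_sub //= in_vs ?vx_le // eqxx /=; exact: j1.
rewrite (@card_sub2 _ _ (hs (vy u)) (vs (vx u))) ?hsin ?vsin //.
  apply/subsetP => e; rewrite in_Sdeg => /andP [ep ue].
  move: (pbd_sides ep); rewrite !inE.
  case/orP => [/orP [/orP [/eqP ee|/eqP ee]|/eqP ee]|/eqP ee]; subst e.
  - by move: ue; rewrite in_hs //; try lia; case/andP => /eqP -> _; rewrite eqxx.
  - by move: ue; rewrite in_hs //; case/andP => /eqP -> _; rewrite eqxx.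
  - by move: ue; rewrite in_vs //; try lia; case/andP => /eqP -> _; rewrite eqxx orbT.
  - by move: ue; rewrite in_vs //; case/andP => /eqP -> _; rewrite eqxx orbT.
exact: hs_neq_vs (vy_lt u) (vx_le u).
Qed.

End Geo.

Lemma deg_symdiff (L : nat) (A B : {set {set vtx L}}) u :
  odd (deg (symdiff A B) u) = odd (deg A u) (+) odd (deg B u).
Proof.
rewrite /deg.
have -> : [set e in symdiff A B | u \in e] =
          symdiff [set e in A | u \in e] [set e in B | u \in e].
  by apply/setP => e; rewrite !(in_symdiff, inE); case: (u \in e); rewrite ?andbF ?andbT.
have H := card_symdiff [set e in A | u \in e] [set e in B | u \in e].
by rewrite -oddD -H mul2n oddD odd_double addbF.
Qed.

Section Phi.
Variable L : nat.
Hypothesis hL : 2 < L.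
Local Notation V := (vtx L).

Definition g (a : V) : nat := if odd (vx a) then vy a else L - vy a.
Definition phi (e : {set V}) : nat := \sum_(a in e) \sum_(b in e) hor a b * g a.
Definition Phi (K : {set {set V}}) : nat := \sum_(e in K) phi e.

Lemma hor_irr (a : V) : hor a a = false.
Proof. rewrite /hor; lia. Qed.

Lemma phi_set2 (a b : V) : a != b -> phi [set a; b] = hor a b * g a + hor b a * g b.
Proof.
move=> ab; rewrite /phi sum_set2 // !sum_set2 // !hor_irr /=; lia.
Qed.

Variable f : plaq L.
Local Notation x := (nat_of_ord f.1).
Local Notation y := (nat_of_ord f.2).

Lemma mkv_neq i j i' j' : i <= L -> j < L -> i' <= L -> j' < L -> (i != i') || (j != j') ->
  mkv hL i j != mkv hL i' j'.
Proof. by move=> *; rewrite eq_mkv // vx_mkv // vy_mkv //; lia. Qed.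

Lemma phi_hs j : j < L -> phi (hs hL f j) = if odd x then j else L - j.
Proof.
move=> hj; have hx := fx f.
rewrite /hs phi_set2; last by apply: mkv_neq => //; lia.
rewrite /hor /g !vx_mkv ?vy_mkv //; try lia.
Qed.

Lemma phi_vs i : i <= L -> phi (vs hL f i) = 0.
Proof.
move=> hi; have hy : y.+1 < L by have := ltn_ord f.2; lia.
rewrite /vs phi_set2; last by apply: mkv_neq => //; lia.
rewrite /hor !vx_mkv //.
have -> : (i + 1 == i) = false by lia.
by rewrite !andbF.
Qed.
End Phi.

Section Flip.
Variable L : nat.
Hypothesis hL : 2 < L.
Variable D : {set vtx L}.
Hypothesis hD : D \subset ~: bnd L.

Lemma notbnd v : v \in D -> v \notin bnd L.
Proof. by move=> vD; have := subsetP hD v vD; rewrite inE. Qed.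

Lemma is_Djoin_flip K (f : plaq L) : is_Djoin D K -> is_Djoin D (symdiff K (pbd f)).
Proof.
case=> sK oK eK; split.
- apply/subsetP => e; rewrite in_symdiff; case eKe: (e \in K) => /=.
    by move=> _; exact: (subsetP sK).
  by rewrite in_pbd => /andP [].
- move=> v vD; rewrite deg_symdiff oK //.
  by rewrite (negbTE (deg_pbd_even hL f (notbnd vD))).
- move=> v vD vB; rewrite deg_symdiff (negbTE (eK v vD vB)).
  by rewrite (negbTE (deg_pbd_even hL f vB)).
Qed.

Lemma flip K (f : plaq L) (jin jout iin iout : nat) :
  is_min_Djoin D K ->
  ((jin == f.2) && (jout == f.2.+1)) || ((jin == f.2.+1) && (jout == f.2)) ->
  ((iin == f.1) && (iout == f.1.+1)) || ((iin == f.1.+1) && (iout == f.1)) ->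
  hs hL f jin \in K -> vs hL f iin \in K ->
  phi (hs hL f jout) < phi (hs hL f jin) ->
  is_min_Djoin D (symdiff K (pbd f)) /\ Phi (symdiff K (pbd f)) < Phi K.
Proof.
move=> [HK Kmin] hj hi Hin Vin hphi.
have hx : (f.1 : nat) < L by exact: ltn_ord.
have hy : (f.2 : nat).+1 < L by have := ltn_ord f.2; lia.
have bj1 : jin < L by lia.
have bj2 : jout < L by lia.
have bi1 : iin <= L by lia.
have bi2 : iout <= L by lia.
set X := pbd f.
have sXK : X :\: K \subset [set hs hL f jout; vs hL f iout].
  apply/subsetP => e; rewrite inE => /andP [eK eX]; move: (pbd_sides hL eX); rewrite !inE.
  case/orP => [/orP [/orP [/eqP ee|/eqP ee]|/eqP ee]|/eqP ee]; subst e;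
  case/orP: hj => /andP [/eqP ej1 /eqP ej2];
  case/orP: hi => /andP [/eqP ei1 /eqP ei2];
  rewrite ?ej1 ?ej2 ?ei1 ?ei2 in Hin Vin *;
  rewrite ?eqxx ?orbT //; by rewrite ?Hin ?Vin in eK.
have sKX : [set hs hL f jin; vs hL f iin] \subset K :&: X.
  case: HK => sK _ _.
  apply/subsetP => e; case/set2P => ->; rewrite in_setI /X in_pbd.
    rewrite Hin (subsetP sK _ Hin) hs_sub //; lia.
  rewrite Vin (subsetP sK _ Vin) vs_sub //; lia.
have neq1 : hs hL f jin != vs hL f iin by apply: hs_neq_vs.
have neq2 : hs hL f jout != vs hL f iout by apply: hs_neq_vs.
have c1 : #|symdiff K X| = #|K :\: X| + #|X :\: K|.
  by rewrite -!sum1_card sum_symdiff.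
have c2 := cardsID X K.
have c3 := subset_leq_card sXK.
have c4 := subset_leq_card sKX.
rewrite cards2 neq2 /= in c3; rewrite cards2 neq1 /= in c4.
have cle : #|symdiff K X| <= #|K|.
  rewrite c1 -c2 addnC leq_add2r; exact: leq_trans c3 c4.
split.
  split; first exact: is_Djoin_flip.
  by move=> J' HJ'; apply: leq_trans cle (Kmin J' HJ').
rewrite /Phi sum_symdiff [X in _ < X](big_setID X) /=.
have p1 := sum_sub (@phi L) sXK.
have p2 := sum_sub (@phi L) sKX.
rewrite sum_set2 // phi_vs // addn0 in p1.
rewrite sum_set2 // phi_vs // addn0 in p2.
rewrite addnC ltn_add2r; apply: (leq_ltn_trans p1); exact: (leq_trans hphi p2).
Qed.
End Flip.

Lemma two_dirs (T : finType) (S : {set T}) (a1 a2 b1 b2 : T) (c1 c2 d1 d2 : bool) :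
  (forall e, e \in S -> [\/ e = a1 /\ c1, e = a2 /\ c2, e = b1 /\ d1 | e = b2 /\ d2]) ->
  ~~ (c1 && c2) -> ~~ (d1 && d2) -> #|S| <= 2.
Proof.
move=> H n1 n2.
have sub : S \subset [set (if c1 then a1 else a2); (if d1 then b1 else b2)].
  apply/subsetP => e eS; rewrite !inE.
  case: (H e eS) => [[-> h]|[-> h]|[-> h]|[-> h]]; move: n1 n2; rewrite ?h;
    case: c1 c2 d1 d2 {H h} => [] [] [] [] //= _ _; rewrite ?eqxx ?orbT //=.
apply: leq_trans (subset_leq_card sub) _.
by rewrite cards2; case: (_ != _).
Qed.

Section Defect.
Variable L : nat.
Hypothesis hL : 2 < L.
Variable D : {set vtx L}.
Hypothesis hD : D \subset ~: bnd L.
Local Notation V := (vtx L).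

Definition nR (v : V) := mkv hL (vx v).+1 (vy v).
Definition nL (v : V) := mkv hL (vx v).-1 (vy v).
Definition nU (v : V) := mkv hL (vx v) (vy v).+1.
Definition nD (v : V) := mkv hL (vx v) (vy v).-1.

Lemma nbr (v : V) e : e \in edges L -> v \in e ->
  [\/ e = [set v; nR v], e = [set v; nL v], e = [set v; nU v] /\ (vy v).+1 < L
    | e = [set v; nD v] /\ 0 < vy v].
Proof.
case/edgesP => a [b [-> hab]]; case/set2P => ->; move: hab; rewrite adjE /hor /ver.
- case/orP => [/andP [/eqP e1 /eqP e2]|/and4P [/eqP e1 _ _ /eqP e2]].
  + apply: Or41; congr [set _; _]; have := vx_le b; move=> hb.
    by apply: vtx_eq; rewrite ?vx_mkv ?vy_mkv ?vy_lt //; lia.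
  + have hb := vy_lt b.
    apply: Or43; split; last by lia.
    by congr [set _; _]; apply: vtx_eq; rewrite ?vx_mkv ?vy_mkv ?vx_le //; lia.
- case/orP => [/andP [/eqP e1 /eqP e2]|/and4P [/eqP e1 _ _ /eqP e2]].
  + apply: Or42; rewrite setUC; congr [set _; _]; have := vx_le b; move=> hb.
    by apply: vtx_eq; rewrite ?vx_mkv ?vy_mkv ?vy_lt //; lia.
  + have hb := vy_lt b.
    apply: Or44; split; last by lia.
    by rewrite setUC; congr [set _; _]; apply: vtx_eq; rewrite ?vx_mkv ?vy_mkv ?vx_le //; lia.
Qed.

Lemma defect K v : is_min_Djoin D K -> v \in D -> deg K v != 1 ->
  exists f : plaq L, is_min_Djoin D (symdiff K (pbd f)) /\ Phi (symdiff K (pbd f)) < Phi K.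
Proof.
move=> [HK Kmin] vD d1.
have vb := notbnd hD vD.
have hx : 1 <= vx v <= L - 1 by move: vb; rewrite inE; have := vx_le v; lia.
have hy := vy_lt v.
have hx1 : 0 < vx v by lia.
have ax1 : (vx v).-1 < L by lia.
have ax2 : vx v < L by lia.
have ax3 : (vx v).-1.+1 = vx v by lia.
have ay1 : (vy v).+1 < L -> vy v < L.-1 by lia.
have ay2 : 0 < vy v -> (vy v).-1 < L.-1 by lia.
have ay3 : 0 < vy v -> (vy v).-1.+1 = vy v by lia.
have b1 : L - (vy v).+1 < L - vy v by lia.
have b2 : 0 < vy v -> (vy v).-1 < vy v by lia.
have c1 : (vy v).-1 < L by lia.
have d3 : 2 < deg K v.
  case: HK => _ oK _; move: (oK v vD) d1; case: (deg K v) => [|[|[|n]]] //.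
set S := [set e in K | v \in e].
set eR := [set v; nR v]; set eL := [set v; nL v]; set eU := [set v; nU v]; set eD := [set v; nD v].
set pR := eR \in K; set pL := eL \in K.
set pU := (eU \in K) && ((vy v).+1 < L); set pD := (eD \in K) && (0 < vy v).
have H4 : forall e, e \in S -> [\/ e = eR /\ pR, e = eU /\ pU, e = eL /\ pL | e = eD /\ pD].
  move=> e; rewrite in_Sdeg => /andP [eK ve].
  have eE : e \in edges L by case: HK => sK _ _; exact: (subsetP sK).
  case: (nbr eE ve) => [E|E|[E h]|[E h]]; rewrite E in eK *.
  - by apply: Or41; split; [|exact: eK].
  - by apply: Or43; split; [|exact: eK].
  - by apply: Or42; split; [|apply/andP; split; [exact: eK|exact: h]].
  - by apply: Or44; split; [|apply/andP; split; [exact: eK|exact: h]].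
have cl1 : (pR && pU) || (pL && pD).
  apply/negPn/negP => /norP [n1 n2].
  by have := two_dirs H4 n1 n2; rewrite /deg -/S in d3; rewrite leqNgt d3.
have cl2 : (pL && pU) || (pR && pD).
  apply/negPn/negP => /norP [n1 n2].
  have H4' : forall e, e \in S -> [\/ e = eL /\ pL, e = eU /\ pU, e = eR /\ pR | e = eD /\ pD].
    by move=> e eS; case: (H4 e eS) => h; [apply: Or43|apply: Or42|apply: Or41|apply: Or44].
  by have := two_dirs H4' n1 n2; rewrite /deg -/S in d3; rewrite leqNgt d3.
have ev : mkv hL (vx v) (vy v) = v by exact: mkv_vxvy.
case: (boolP (odd (vx v))) => px.
- case/orP: cl2 => /andP [h1 h2].
  +
    move: h2; rewrite /pU => /andP [h2 hy1].
    have hf2 := ay1 hy1.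
    exists (mkp hL (vx v).-1 (vy v)).
    apply: (flip hD (jin := vy v) (jout := (vy v).+1) (iin := vx v) (iout := (vx v).-1)).
    + by split.
    + by rewrite mkp2 // !eqxx.
    + by rewrite mkp1 // ax3 !eqxx orbT.
    + by rewrite /hs mkp1 // ax3 ev setUC.
    + by rewrite /vs mkp2 // ev.
    + rewrite !phi_hs // mkp1 //.
      have -> : odd (vx v).-1 = false by move: px; case: (vx v) hx1 => [|n] //= _; by case: (odd n).
      exact: b1.
  +
    move: h2; rewrite /pD => /andP [h2 hy1].
    have hf2 := ay2 hy1.
    exists (mkp hL (vx v) (vy v).-1).
    apply: (flip hD (jin := vy v) (jout := (vy v).-1) (iin := vx v) (iout := (vx v).+1)).
    + by split.
    + by rewrite mkp2 // (ay3 hy1) !eqxx orbT.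
    + by rewrite mkp1 // !eqxx.
    + by rewrite /hs mkp1 // ev.
    + by rewrite /vs mkp2 // (ay3 hy1) ev setUC.
    + by rewrite !phi_hs // ?c1 // mkp1 // px; apply: b2.
- case/orP: cl1 => /andP [h1 h2].
  +
    move: h2; rewrite /pU => /andP [h2 hy1].
    have hf2 := ay1 hy1.
    exists (mkp hL (vx v) (vy v)).
    apply: (flip hD (jin := vy v) (jout := (vy v).+1) (iin := vx v) (iout := (vx v).+1)).
    + by split.
    + by rewrite mkp2 // !eqxx.
    + by rewrite mkp1 // !eqxx.
    + by rewrite /hs mkp1 // ev.
    + by rewrite /vs mkp2 // ev.
    + by rewrite !phi_hs // mkp1 // (negbTE px); exact: b1.
  +
    move: h2; rewrite /pD => /andP [h2 hy1].
    have hf2 := ay2 hy1.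
    exists (mkp hL (vx v).-1 (vy v).-1).
    apply: (flip hD (jin := vy v) (jout := (vy v).-1) (iin := vx v) (iout := (vx v).-1)).
    + by split.
    + by rewrite mkp2 // (ay3 hy1) !eqxx orbT.
    + by rewrite mkp1 // ax3 !eqxx orbT.
    + by rewrite /hs mkp1 // ax3 ev setUC.
    + by rewrite /vs mkp2 // (ay3 hy1) ev setUC.
    + rewrite !phi_hs // ?c1 // mkp1 //.
      have -> : odd (vx v).-1 = true by move: px; case: (vx v) hx1 => [|n] //= _; by case: (odd n).
      exact: b2.
Qed.

End Defect.

Lemma main_ind L (hL : 2 < L) (D : {set vtx L}) (hD : D \subset ~: bnd L) n :
  forall K, is_min_Djoin D K -> Phi K < n ->
  exists P : {set plaq L}, is_min_Djoin D (symdiff K (pbd_sum P)) /\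
    (forall v, v \in D -> deg (symdiff K (pbd_sum P)) v = 1).
Proof.
elim: n => [|n IH] K HK hn //.
case: (boolP [forall v in D, deg K v == 1]) => Hall.
  exists set0; rewrite /pbd_sum big_set0 symdiffs0; split => //.
  by move=> v vD; apply/eqP; move/forall_inP: Hall; apply.
move/forall_inPn: Hall => [v vD dv].
have [f [HK' hPhi]] := defect hL hD HK vD dv.
have [P' [H1 H2]] := IH _ HK' (leq_trans hPhi hn).
have E : exists P, symdiff K (pbd_sum P) = symdiff (symdiff K (pbd f)) (pbd_sum P').
  case fP: (f \in P').
    exists (P' :\ f); rewrite [pbd_sum P'](big_setD1 f fP) /=.
    apply/setP => e; rewrite !in_symdiff.
    by case: (e \in K); case: (e \in pbd f); case: (e \in pbd_sum (P' :\ f)).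
  exists (f |: P'); rewrite /pbd_sum big_setU1 ?fP //= -/(pbd_sum P').
  by rewrite symdiffA.
have [P EP] := E.
by exists P; rewrite EP.
Qed.

Section Init.
Variable L : nat.
Hypothesis hL : 2 < L.
Variable D : {set vtx L}.
Hypothesis hD : D \subset ~: bnd L.
Local Notation V := (vtx L).

Definition cnt (y i : nat) := #|[set d in D | (vy d == y) && (i <= vx d)]|.
Definition J0 : {set {set V}} :=
  [set e | [exists a, exists b, [&& e == [set a; b], hor a b & odd (cnt (vy a) (vx b))]]].

Lemma J0P e : reflect (exists a b, [/\ e = [set a; b], hor a b & odd (cnt (vy a) (vx b))])
  (e \in J0).
Proof.
rewrite inE; apply: (iffP existsP).
  move=> [a] /existsP [b] /and3P [/eqP -> h1 h2].
  by exists a, b.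
move=> [a [b [-> h1 h2]]].
by exists a; apply/existsP; exists b; rewrite eqxx h1 h2.
Qed.

Lemma hor_neq (a b : V) : hor a b -> a != b.
Proof. by move=> h; apply/eqP => ab; subst b; rewrite hor_irr in h. Qed.

Lemma cnt_step (u : V) : cnt (vy u) (vx u) = (u \in D) + cnt (vy u) (vx u).+1.
Proof.
rewrite /cnt (cardsD1 u) inE eqxx leqnn !andbT; congr (_ + _).
apply: eq_card => d; rewrite !inE vtx_eqE.
case: (d \in D); rewrite /= ?andbF //.
case: (vy d == vy u); rewrite /= ?andbF ?andbT //; lia.
Qed.

Lemma deg_J0 (u : V) : u \notin bnd L -> odd (deg J0 u) = (u \in D).
Proof.
move=> ub.
have hx : 1 <= vx u <= L - 1 by move: ub; rewrite inE; have := vx_le u; lia.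
have hy := vy_lt u.
have xR : vx (nR hL u) = (vx u).+1 by rewrite vx_mkv //; lia.
have yR : vy (nR hL u) = vy u by rewrite vy_mkv.
have xL : vx (nL hL u) = (vx u).-1 by rewrite vx_mkv //; lia.
have yL : vy (nL hL u) = vy u by rewrite vy_mkv.
have hR : hor u (nR hL u) by rewrite /hor xR yR eqxx addn1 eqxx.
have hL' : hor (nL hL u) u by rewrite /hor xL yL eqxx /=; lia.
have nRL : [set u; nR hL u] != [set u; nL hL u].
  apply/negP => /eqP E.
  have : nR hL u \in [set u; nL hL u] by rewrite -E !inE eqxx orbT.
  rewrite !inE !vtx_eqE xR xL; lia.
have sub : [set e in J0 | u \in e] \subset [set [set u; nR hL u]; [set u; nL hL u]].
  apply/subsetP => e; rewrite in_Sdeg => /andP [/J0P [a [b [-> hab _]]]].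
  move: (hab); rewrite /hor => /andP [/eqP e1 /eqP e2].
  have hb := vx_le b.
  case/set2P => ua; subst u; rewrite !inE.
    suff -> : b = nR hL a by rewrite eqxx.
    by apply: vtx_eq; rewrite ?xR ?yR; lia.
  suff -> : a = nL hL b by rewrite setUC eqxx orbT.
  by apply: vtx_eq; rewrite ?xL ?yL; lia.
rewrite /deg (card_sub2 sub nRL) !in_Sdeg !set21 !andbT.
have eR : ([set u; nR hL u] \in J0) = odd (cnt (vy u) (vx u).+1).
  apply/J0P/idP => [[a [b [E h1 h2]]]|h].
    case: (set2_eq (hor_neq h1) E) => [[ea eb]|[ea eb]]; first by rewrite -ea -eb xR in h2.
    by move: h1; rewrite /hor -ea -eb xR; lia.
  by exists u, (nR hL u); rewrite xR.
have eL : ([set u; nL hL u] \in J0) = odd (cnt (vy u) (vx u)).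
  apply/J0P/idP => [[a [b [E h1 h2]]]|h].
    case: (set2_eq (hor_neq h1) E) => [[ea eb]|[ea eb]]; last by rewrite -ea -eb yL in h2.
    by move: h1; rewrite /hor -ea -eb xL; lia.
  by exists (nL hL u), u; rewrite setUC yL.
rewrite eR eL cnt_step oddD !oddD !oddb.
by case: (u \in D); case: (odd _).
Qed.

Lemma J0_Djoin : is_Djoin D J0.
Proof.
split.
- apply/subsetP => e /J0P [a [b [-> h _]]].
  by apply/edgesP; exists a, b; rewrite adjE h.
- by move=> v vD; rewrite deg_J0 ?(notbnd hD vD).
- by move=> v vD vB; rewrite deg_J0 // (negbTE vD).
Qed.
End Init.

From Stdlib Require Import Classical.

Lemma exists_min L (D : {set vtx L}) J : is_Djoin D J -> exists K, is_min_Djoin D K.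
Proof.
suff H : forall n J, is_Djoin D J -> #|J| < n -> exists K, is_min_Djoin D K.
  by move=> HJ; apply: (H _ J HJ (ltnSn _)).
elim=> [|n IH] J' HJ hn //.
case: (classic (forall J'', is_Djoin D J'' -> #|J'| <= #|J''|)) => [Hm|Hm].
  by exists J'.
have [J'' HJ''] := not_all_ex_not _ _ Hm.
have [h1 h2] := imply_to_and _ _ HJ''.
apply: (IH J'' h1).
by move/negP: h2; rewrite -ltnNge => h; apply: leq_trans h hn.
Qed.

Unset Implicit Arguments.

Theorem theorem3p2 (L : nat) (hL : 3 <= L) (D : {set vtx L})
  (hD : D \subset ~: bnd L) :
  (exists J : {set {set vtx L}},
      is_min_Djoin D J /\ (forall v, v \in D -> deg J v = 1)) /\
  (forall J : {set {set vtx L}}, is_min_Djoin D J ->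
     exists P : {set plaq L},
       #|symdiff J (pbd_sum P)| = #|J| /\
       (forall v, v \in D -> deg (symdiff J (pbd_sum P)) v = 1)).
Proof.
split.
  have [K HK] := exists_min (J0_Djoin hL hD).
  have [P [H1 H2]] := main_ind hL hD HK (ltnSn (Phi K)).
  by exists (symdiff K (pbd_sum P)).
move=> J HJ.
have [P [H1 H2]] := main_ind hL hD HJ (ltnSn (Phi J)).
exists P; split => //.
apply/eqP; rewrite eqn_leq (H1.2 J HJ.1).
exact: HJ.2 _ H1.1.
Qed.
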